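(* Let $E/\mathbb{Q}$ be the elliptic curve $y^2=x^3+a_4x+a_6$ with $a_4,a_6\in\mathbb{Z}$, let $(u,v)\in\mathbb{Z}^2$ be map-suitable for $E$, and suppose $-D_E(u,v)$ is a negative fundamental discriminant. Then: (1) For $P\in E(\mathbb{Q})\setminus\{\mathcal{O}\}$, the $\mathrm{SL}_2(\mathbb{Z})$-class in $\mathrm{CL}(-D_E(u,v))$ of the form $F_{P,\mu}$ depends only on $P$ and not on the choice of $\mu$; hence, setting $\Phi_{u,v}(\mathcal{O})$ to be the identity, this defines a map $\Phi_{u,v}:E(\mathbb{Q})\to\mathrm{CL}(-D_E(u,v))$. (2) If $P=(A/C^2,B/C^3)\neq\mathcal{O}$ and $\Phi_{u,v}(P)$ is the identity of $\mathrm{CL}(-D_E(u,v))$, then either $v\mid C$ or $\frac{va}{g^2}\ge d_E(u,v)$, where $a=Av+C^2u$ and $g=\gcd(C,v)$.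
   Context: For integers $u,v$ put $d_E(u,v):=v(u^3+a_4uv^2-a_6v^3)$ and $D_E(u,v):=4d_E(u,v)$. A pair $(u,v)\in\mathbb{Z}^2$ is map-suitable for $E$ if $u$, $v$, $3u^2+a_4v^2$ and $D_E(u,v)$ are all positive. Each $P\in E(\mathbb{Q})\setminus\{\mathcal{O}\}$ is written $P=(A/C^2,B/C^3)$ with $A,B,C\in\mathbb{Z}$, $C>0$, $\gcd(A,C)=\gcd(B,C)=1$; put $a=Av+C^2u$, $g=\gcd(C,v)$, and for an integer $\mu$ with $\frac{C^3}{g^2}\mu\equiv1\pmod{\frac{va}{g^2}}$ let $$F_{P,\mu}(x,y)=\frac{va}{g^2}x^2+2\mu\frac{Bv^2}{g^2}xy+\frac{\mu^2\frac{B^2v^4}{g^4}+d_E(u,v)}{\frac{va}{g^2}}y^2,$$ a positive definite integral form of discriminant $-D_E(u,v)$. $\mathrm{CL}(-D)$ is identified with the group of $\mathrm{SL}_2(\mathbb{Z})$-classes of primitive positive definite forms of discriminant $-D$. *)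

(* Defs.v *)
From Stdlib Require Import ZArith.
Open Scope Z_scope.

Definition dE (a4 a6 u v : Z) : Z := v * (u^3 + a4*u*v^2 - a6*v^3).
Definition DE (a4 a6 u v : Z) : Z := 4 * dE a4 a6 u v.

Definition nonsingular (a4 a6 : Z) : Prop := 4*a4^3 + 27*a6^2 <> 0.

Definition map_suitable (a4 a6 u v : Z) : Prop :=
  0 < u /\ 0 < v /\ 0 < 3*u^2 + a4*v^2 /\ 0 < DE a4 a6 u v.

Definition squarefree (n : Z) : Prop :=
  forall k : Z, (k * k | n) -> k = 1 \/ k = -1.

(* fundamental discriminant (Z.modulo is floor-mod, so nonnegative mod 4) *)
Definition fundamental_discriminant (D : Z) : Prop :=
  D <> 1 /\
  ((D mod 4 = 1 /\ squarefree D) \/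
   (exists m, D = 4 * m /\ (m mod 4 = 2 \/ m mod 4 = 3) /\ squarefree m)).

(* P = (A/C^2, B/C^3) in E(Q) \ {O}, written in lowest terms *)
Definition affine_point (a4 a6 A B C : Z) : Prop :=
  0 < C /\ Z.gcd A C = 1 /\ Z.gcd B C = 1 /\
  B^2 = A^3 + a4*A*C^4 + a6*C^6.

Definition qform := (Z * Z * Z)%type.

Definition qeval (F : qform) (x y : Z) : Z :=
  let '(a, b, c) := F in a*x^2 + b*x*y + c*y^2.

Definition qdisc (F : qform) : Z := let '(a, b, c) := F in b^2 - 4*a*c.

Definition primitive_pd (F : qform) : Prop :=
  let '(a, b, c) := F in 0 < a /\ Z.gcd (Z.gcd a b) c = 1.

Definition sl2_equiv (F G : qform) : Prop :=
  exists p q r s : Z, p*s - q*r = 1 /\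
    forall x y, qeval G x y = qeval F (p*x + q*y) (r*x + s*y).

(* principal form of discriminant -4 d : x^2 + d y^2 (identity of CL(-D)) *)
Definition principal_form (a4 a6 u v : Z) : qform := (1, 0, dE a4 a6 u v).

Definition a_of (u v A C : Z) : Z := A*v + C^2*u.
Definition g_of (v C : Z) : Z := Z.gcd C v.

Definition lead_of (u v A C : Z) : Z := v * a_of u v A C / (g_of v C)^2.

Definition mu_ok (u v A C mu : Z) : Prop :=
  (lead_of u v A C | (C^3 / (g_of v C)^2) * mu - 1).

Definition third_num (a4 a6 u v B C mu : Z) : Z :=
  mu^2 * (B^2 * v^4 / (g_of v C)^4) + dE a4 a6 u v.

Definition F_P (a4 a6 u v A B C mu : Z) : qform :=
  (lead_of u v A C,
   2 * mu * (B * v^2 / (g_of v C)^2),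
   third_num a4 a6 u v B C mu / lead_of u v A C).

(* Main.v *)
Require Import Defs.
From Stdlib Require Import ZArith Znumtheory Lia.
Open Scope Z_scope.

Lemma cop_mul_r a b c : Z.gcd a b = 1 -> Z.gcd a c = 1 -> Z.gcd a (b*c) = 1.
Proof. intros H1 H2. apply Zgcd_1_rel_prime. apply rel_prime_mult; apply Zgcd_1_rel_prime; auto. Qed.

Lemma cop_mul_l a b c : Z.gcd a c = 1 -> Z.gcd b c = 1 -> Z.gcd (a*b) c = 1.
Proof. intros. rewrite Z.gcd_comm. apply cop_mul_r; rewrite Z.gcd_comm; auto. Qed.

Lemma cop_div a b r : Z.gcd a b = 1 -> (r | a) -> Z.gcd r b = 1.
Proof. intros H1 H2. apply Zgcd_1_rel_prime. apply rel_prime_div with a; auto. apply Zgcd_1_rel_prime; auto. Qed.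

Lemma sqf_one k d : (forall k, (k*k | d) -> k = 1 \/ k = -1) -> (k*k | d) -> 0 <= k -> k = 1.
Proof. intros H H1 H2. destruct (H k H1); lia. Qed.

Lemma abs_contra (X Y P D be2 h : Z) : 0 < h -> 0 < Y -> X + Y <= 0 -> 0 < P -> 0 < D -> 0 <= be2 ->
  be2 + D = h*(X+Y) * ((X - -Y)*(X + 2*(-Y)) + P) -> False.
Proof.
  intros Hh HY Hn HP HD Hb Hk.
  assert (P1 : 0 <= (X - -Y)*(X + 2*(-Y))) by (apply Z.mul_nonpos_nonpos; lia).
  assert (H1 : h*(X+Y) <= 0) by (apply Z.mul_nonneg_nonpos; lia).
  assert (H2 : h*(X+Y) * ((X - -Y)*(X + 2*(-Y)) + P) <= 0) by (apply Z.mul_nonpos_nonneg; lia).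
  lia.
Qed.

Lemma key_pos a4 u g h C1 A (d be2 : Z) :
  0 < u -> 0 < g -> 0 < h -> 0 < C1 -> 0 < 3*u^2 + a4*(g*h)^2 -> 0 < d -> 0 <= be2 ->
  be2 + d * (g*C1^3)^2 = h*(A*h+g*C1^2*u) *
    (A^2*h^2 - A*g*C1^2*u*h + g^2*C1^4*u^2 + a4*g^4*C1^4*h^2) ->
  0 < A*h+g*C1^2*u.
Proof.
  intros Hu Hg Hh HC Hms Hd Hb Hk.
  destruct (Z_lt_le_dec 0 (A*h+g*C1^2*u)) as [|Hn]; auto. exfalso.
  assert (Eb : A^2*h^2 - A*g*C1^2*u*h + g^2*C1^4*u^2 + a4*g^4*C1^4*h^2
     = (A*h - -(g*C1^2*u))*(A*h+2*(-(g*C1^2*u))) + (g^2*C1^4)*(3*u^2 + a4*(g*h)^2)) by ring.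
  rewrite Eb in Hk. clear Eb.
  assert (Q : 0 < g*C1^2*u) by (apply Z.mul_pos_pos; [apply Z.mul_pos_pos; [|apply Z.pow_pos_nonneg]|]; lia).
  assert (P2 : 0 < (g^2*C1^4)*(3*u^2 + a4*(g*h)^2)) by (apply Z.mul_pos_pos; [apply Z.mul_pos_pos; apply Z.pow_pos_nonneg; lia|lia]).
  assert (PD : 0 < d * (g*C1^3)^2) by (apply Z.mul_pos_pos; [lia|apply Z.pow_pos_nonneg; [apply Z.mul_pos_pos; [lia|apply Z.pow_pos_nonneg]|]; lia]).
  exact (abs_contra _ _ _ _ _ _ Hh Q Hn P2 PD Hb Hk).
Qed.

Definition Fm (L be bsq d mu : Z) : qform := (L, 2*mu*be, (mu^2*bsq + d)/L).

Lemma core_gen (L cc be bsq bb d : Z) :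
  0 < L -> Z.gcd cc L = 1 -> bsq + d*cc^2 = L*bb -> bsq = be^2 -> 0 < d ->
  (forall k, (k*k | d) -> k = 1 \/ k = -1) -> (d mod 4 = 1 \/ d mod 4 = 2) ->
  (exists mu, (L | cc*mu - 1)) /\
  (forall mu, (L | cc*mu - 1) ->
     (L | mu^2*bsq + d) /\ qdisc (Fm L be bsq d mu) = -(4*d) /\ primitive_pd (Fm L be bsq d mu)) /\
  (forall mu1 mu2, (L | cc*mu1 - 1) -> (L | cc*mu2 - 1) ->
     sl2_equiv (Fm L be bsq d mu1) (Fm L be bsq d mu2)) /\
  (forall mu, (L | cc*mu - 1) -> sl2_equiv (Fm L be bsq d mu) (1, 0, d) -> L = 1 \/ L >= d).
Proof.
  intros HL Hc Hk Hb Hd Hsq Hm.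
  assert (TN : forall mu, (L | cc*mu - 1) -> exists W, mu^2*bsq + d = W*L).
  { intros mu [t Ht]. exists (mu^2*bb - d*t*(cc*mu+1)).
    assert (E : bsq = L*bb - d*cc^2) by lia. rewrite E.
    replace ((mu^2*bb - d*t*(cc*mu+1))*L) with (mu^2*bb*L - d*(cc*mu+1)*(t*L)) by ring.
    rewrite <- Ht. ring. }
  assert (DIV : forall mu, (L | cc*mu - 1) -> exists W, mu^2*bsq + d = W*L /\ (mu^2*bsq + d)/L = W).
  { intros mu H. destruct (TN mu H) as [W HW]. exists W. split; auto. rewrite HW. apply Z.div_mul. lia. }
  split; [|split; [|split]].
  - apply Zgcd_1_rel_prime in Hc. apply rel_prime_bezout in Hc. destruct Hc as [x y Hxy].
    exists x. exists (-y). lia.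
  - intros mu H. destruct (DIV mu H) as [W [HW HW']]. split; [exists W; auto|].
    unfold Fm, qdisc, primitive_pd. rewrite HW'. split.
    + subst bsq. lia.
    + split; [auto|].
      set (k := Z.gcd (Z.gcd L (2*mu*be)) W).
      assert (k1 : (k | L)) by (eapply Z.divide_trans; [apply Z.gcd_divide_l|apply Z.gcd_divide_l]).
      assert (k2 : (k | 2*mu*be)) by (eapply Z.divide_trans; [apply Z.gcd_divide_l|apply Z.gcd_divide_r]).
      assert (k3 : (k | W)) by apply Z.gcd_divide_r.
      assert (k0 : 0 <= k) by apply Z.gcd_nonneg.
      destruct k1 as [l1 Hl1], k2 as [m1 Hm1], k3 as [w1 Hw1].
      assert (D4 : 4*d = (k*k) * (4*l1*w1 - m1^2)).
      { assert (4*d = 4*(W*L) - (2*mu*be)^2) by (subst bsq; lia).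
        rewrite H0, Hl1, Hm1, Hw1. ring. }
      destruct (Z.Even_or_Odd k) as [[k' Hk'] | [k' Hk']].
      * exfalso. subst k.
        assert (Hd' : (k'*k' | d)).
        { exists (4*l1*w1 - m1^2 ). lia. }
        assert (k' = 1) by (destruct (Hsq k' Hd'); lia). subst k'.
        assert (EL : L = 2*l1) by lia. assert (EW : W = 2*w1) by lia.
        assert (Ed : d = 4*(l1*w1) - (mu*be)^2) by (subst bsq; rewrite EL, EW in HW; lia).
        destruct (Z.Even_or_Odd (mu*be)) as [[z Hz] | [z Hz]]; rewrite Hz in Ed.
        -- assert (Ed2 : d = (l1*w1 - z^2)*4) by (rewrite Ed; ring).
           rewrite Ed2 in Hm. rewrite Z.mod_mul in Hm; lia.
        -- assert (Ed2 : d = 3 + (l1*w1 - z^2 - z - 1)*4) by (rewrite Ed; ring).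
           rewrite Ed2 in Hm. rewrite Z.mod_add in Hm; [|lia]. cbv in Hm. lia.
      * assert (B4 : Z.gcd 4 (k*k) = 1).
        { apply Z.bezout_1_gcd. exists (-(k'^2+k')), 1. subst k. lia. }
        assert (H4 : (4 | (k*k) * (4*l1*w1 - m1^2))) by (rewrite <- D4; exists d; ring).
        destruct (Z.gauss _ _ _ H4 B4) as [q Hq].
        assert (Hd' : (k*k | d)) by (exists q; lia).
        destruct (Hsq k Hd'); lia.
  - intros mu1 mu2 H1 H2.
    assert (H3 : (L | cc*(mu2-mu1))).
    { replace (cc*(mu2-mu1)) with ((cc*mu2-1) - (cc*mu1-1)) by ring. apply Z.divide_sub_r; auto. }
    rewrite Z.gcd_comm in Hc. destruct (Z.gauss _ _ _ H3 Hc) as [n Hn].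
    destruct (DIV mu1 H1) as [W1 [HW1 HW1']]. destruct (DIV mu2 H2) as [W2 [HW2 HW2']].
    unfold sl2_equiv, Fm. rewrite HW1', HW2'.
    exists 1, (n*be), 0, 1. split; [ring|]. intros x y. unfold qeval.
    apply (Z.mul_cancel_l _ _ L); [lia|].
    assert (E : mu2 = mu1 + n*L) by lia. subst mu2 bsq.
    assert (Y2 : y^2*(W2*L) = y^2*((mu1 + n*L)^2*be^2 + d)) by (rewrite HW2; ring).
    assert (Y1 : y^2*(W1*L) = y^2*(mu1^2*be^2 + d)) by (rewrite HW1; ring).
    rewrite <- Z.sub_move_0_r.
    transitivity (y^2*(W2*L) - y^2*((mu1+n*L)^2*be^2+d) - (y^2*(W1*L) - y^2*(mu1^2*be^2+d))).
    { ring. } rewrite Y1, Y2. ring.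
  - intros mu H [p [q [r [s [Hps Heq]]]]].
    specialize (Heq s (-r)). unfold qeval, Fm in Heq.
    assert (E1 : p*s+q*(-r) = 1) by lia. assert (E2 : r*s + s*(-r) = 0) by ring.
    rewrite E1, E2 in Heq.
    assert (HLs : L = s^2 + d*r^2) by lia.
    destruct (Z.eq_dec r 0) as [Hr|Hr].
    + left. subst r. rewrite Z.mul_comm in Hps. assert (s*p = 1) by lia.
      destruct (Z.mul_eq_1 _ _ H0); subst s; lia.
    + right. assert (r^2 >= 1) by nia.
      assert (d*1 <= d*r^2) by (apply Z.mul_le_mono_nonneg_l; lia).
      assert (0 <= s^2) by (rewrite Z.pow_2_r; apply Z.square_nonneg). lia.
Qed.

Lemma divE (X Y g : Z) : g <> 0 -> X = Y * g -> X / g = Y.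
Proof. intros Hg E. subst X. apply Z.div_mul. auto. Qed.

Lemma point_core a4 a6 u v A B C :
  0 < u -> 0 < v -> 0 < 3*u^2 + a4*v^2 -> 0 < dE a4 a6 u v ->
  (forall k, (k*k | dE a4 a6 u v) -> k = 1 \/ k = -1) ->
  (dE a4 a6 u v mod 4 = 1 \/ dE a4 a6 u v mod 4 = 2) ->
  affine_point a4 a6 A B C ->
  (exists mu, mu_ok u v A C mu) /\
     (forall mu, mu_ok u v A C mu ->
        (lead_of u v A C | third_num a4 a6 u v B C mu) /\
        qdisc (F_P a4 a6 u v A B C mu) = - DE a4 a6 u v /\
        primitive_pd (F_P a4 a6 u v A B C mu)) /\
     (forall mu1 mu2, mu_ok u v A C mu1 -> mu_ok u v A C mu2 ->
        sl2_equiv (F_P a4 a6 u v A B C mu1) (F_P a4 a6 u v A B C mu2)) /\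
  (forall mu : Z, mu_ok u v A C mu ->
     sl2_equiv (F_P a4 a6 u v A B C mu) (principal_form a4 a6 u v) ->
     (v | C) \/ lead_of u v A C >= dE a4 a6 u v).
Proof.
  intros Hu Hv Hms Hd Hsq Hm [HC [HAC [HBC Hcurve]]].
  assert (Hg0 : 0 < g_of v C).
  { unfold g_of. pose proof (Z.gcd_nonneg C v).
    destruct (Z.eq_dec (Z.gcd C v) 0) as [E|E]; [apply Z.gcd_eq_0_l in E; lia | lia]. }
  destruct (Z.gcd_divide_l C v) as [C1 HC1]. destruct (Z.gcd_divide_r C v) as [h Hh].
  assert (Hcop : Z.gcd C1 h = 1).
  { pose proof (Z.gcd_div_gcd C v (Z.gcd C v)) as G. unfold g_of in Hg0.
    rewrite (divE C C1), (divE v h) in G; try lia; apply G; auto; lia. }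
  fold (g_of v C) in HC1, Hh.
  remember (g_of v C) as g eqn:Hg.
  assert (HC' : C = g*C1) by lia. assert (Hv' : v = g*h) by lia. clear HC1 Hh.
  subst C v.
  assert (HC1 : 0 < C1) by (apply (Z.mul_pos_cancel_l g); lia).
  assert (Hh : 0 < h) by (apply (Z.mul_pos_cancel_l g); lia).
  set (d := dE a4 a6 u (g*h)) in *.
  set (bb := A^2*h^2 - A*g*C1^2*u*h + g^2*C1^4*u^2 + a4*g^4*C1^4*h^2).
  assert (KEY : B^2*h^4 + d*(g*C1^3)^2 = h*(A*h+g*C1^2*u)*bb).
  { unfold d, bb, dE. rewrite Hcurve. ring. }
  assert (Ha1 : 0 < A*h+g*C1^2*u).
  { apply (key_pos a4 u g h C1 A d (B^2*h^4)); auto; try (apply Z.mul_nonneg_nonneg; [rewrite Z.pow_2_r; apply Z.square_nonneg | apply Z.pow_nonneg; lia]). }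
  assert (Hgh : Z.gcd g h = 1).
  { pose proof (Z.gcd_nonneg g h). remember (Z.gcd g h) as k eqn:Hk.
    assert (Ha : (k | g)) by (rewrite Hk; apply Z.gcd_divide_l).
    assert (Hb : (k | h)) by (rewrite Hk; apply Z.gcd_divide_r).
    destruct Ha as [a Ha], Hb as [b Hb].
    assert (Ed : (g*h | d)) by (exists (u^3 + a4*u*(g*h)^2 - a6*(g*h)^3); unfold d, dE; ring).
    assert (Hkk0 : (k*k | g*h)) by (exists (a*b); rewrite Ha, Hb; ring).
    assert (Hkk : (k*k | d)) by (apply Z.divide_trans with (g*h); auto).
    destruct (Hsq k Hkk) as [E|E]; [exact E|]. exfalso. clear - H E. lia. }
  assert (Ga : Z.gcd g A = 1).
  { apply (cop_div (g*C1)); [rewrite Z.gcd_comm; auto | exists C1; ring]. }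
  assert (GC1A : Z.gcd C1 A = 1).
  { apply (cop_div (g*C1)); [rewrite Z.gcd_comm; auto | exists g; ring]. }
  assert (Gga1 : Z.gcd g (A*h + g*C1^2*u) = 1).
  { replace (A*h + g*C1^2*u) with (A*h + (C1^2*u)*g) by ring.
    rewrite Z.gcd_add_mult_diag_r. apply cop_mul_r; auto. }
  assert (GC1a1 : Z.gcd C1 (A*h + g*C1^2*u) = 1).
  { replace (A*h + g*C1^2*u) with (A*h + (g*C1*u)*C1) by ring.
    rewrite Z.gcd_add_mult_diag_r. apply cop_mul_r; auto. }
  assert (GL : Z.gcd (g*C1^3) (h*(A*h+g*C1^2*u)) = 1).
  { replace (g*C1^3) with (g*(C1*(C1*C1))) by ring.
    assert (GgL : Z.gcd g (h*(A*h+g*C1^2*u)) = 1) by (apply cop_mul_r; auto).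
    assert (GC1L : Z.gcd C1 (h*(A*h+g*C1^2*u)) = 1) by (apply cop_mul_r; auto).
    apply cop_mul_l; auto. apply cop_mul_l; auto. apply cop_mul_l; auto. }
  pose proof (core_gen (h*(A*h+g*C1^2*u)) (g*C1^3) (B*h^2) (B^2*h^4) bb d) as CG.
  destruct CG as [R1 [R2 [R3 R4]]]; auto.
  { apply Z.mul_pos_pos; auto. }
  { ring. }
  assert (Hg2 : g^2 <> 0) by (clear - Hg0; assert (0 < g^2) by (apply Z.pow_pos_nonneg; lia); lia).
  assert (Hg4 : g^4 <> 0) by (clear - Hg0; assert (0 < g^4) by (apply Z.pow_pos_nonneg; lia); lia).
  assert (E1 : lead_of u (g*h) A (g*C1) = h*(A*h+g*C1^2*u)).
  { unfold lead_of, a_of. rewrite <- Hg. apply divE; auto. ring. }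
  assert (E2 : (g*C1)^3 / (g_of (g*h) (g*C1))^2 = g*C1^3).
  { rewrite <- Hg. apply divE; auto. ring. }
  assert (E3 : B*(g*h)^2 / (g_of (g*h) (g*C1))^2 = B*h^2).
  { rewrite <- Hg. apply divE; auto. ring. }
  assert (E4 : B^2*(g*h)^4 / (g_of (g*h) (g*C1))^4 = B^2*h^4).
  { rewrite <- Hg. apply divE; auto. ring. }
  unfold mu_ok, F_P, third_num, principal_form, DE. rewrite E1, E2, E3, E4. fold d.
  unfold Fm in R1, R2, R3, R4.
  split; [exact R1|split; [|split; [exact R3|]]].
  - intros mu H. destruct (R2 mu H) as [X [Y Z]]. split; [exact X|split; [exact Y|exact Z]].
  - intros mu H HS. destruct (R4 mu H HS) as [E|E]; [left|right; lia].
    assert (Hh1 : h = 1) by (destruct (Z.mul_eq_1 _ _ E); lia).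
    subst h. exists C1. ring.
Qed.

Theorem theorem2p3 (a4 a6 u v : Z) :
  nonsingular a4 a6 ->
  map_suitable a4 a6 u v ->
  fundamental_discriminant (- DE a4 a6 u v) ->
  (* (1) well-defined map P |-> class of F_{P,mu} in CL(-D_E(u,v)) *)
  (forall A B C : Z, affine_point a4 a6 A B C ->
     (exists mu, mu_ok u v A C mu) /\
     (forall mu, mu_ok u v A C mu ->
        (lead_of u v A C | third_num a4 a6 u v B C mu) /\
        qdisc (F_P a4 a6 u v A B C mu) = - DE a4 a6 u v /\
        primitive_pd (F_P a4 a6 u v A B C mu)) /\
     (forall mu1 mu2, mu_ok u v A C mu1 -> mu_ok u v A C mu2 ->
        sl2_equiv (F_P a4 a6 u v A B C mu1) (F_P a4 a6 u v A B C mu2))) /\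
  (* (2) trivial image forces v | C or v a / g^2 >= d_E(u,v) *)
  (forall A B C mu : Z, affine_point a4 a6 A B C -> mu_ok u v A C mu ->
     sl2_equiv (F_P a4 a6 u v A B C mu) (principal_form a4 a6 u v) ->
     (v | C) \/ lead_of u v A C >= dE a4 a6 u v).
Proof.
  intros _ [Hu [Hv [Hms HD]]] [_ Hfd].
  unfold DE in HD.
  assert (Hd : 0 < dE a4 a6 u v) by lia.
  assert (X : (forall k, (k*k | dE a4 a6 u v) -> k = 1 \/ k = -1) /\
              (dE a4 a6 u v mod 4 = 1 \/ dE a4 a6 u v mod 4 = 2)).
  { unfold DE in Hfd. revert Hfd. generalize (dE a4 a6 u v). intros d Hfd.
    destruct Hfd as [[Hm _] | [m [Hm [Hm4 Hsqm]]]].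
    - exfalso. replace (- (4*d)) with ((-d)*4) in Hm by ring. rewrite Z.mod_mul in Hm; lia.
    - assert (Em : d = -m) by lia. subst d. split.
      + intros k Hk. apply Hsqm. exact (proj1 (Z.divide_opp_r _ _) Hk).
      + rewrite Z.mod_opp_l_nz; lia. }
  destruct X as [Hsq Hm].
  split.
  - intros A B C HP. destruct (point_core a4 a6 u v A B C Hu Hv Hms Hd Hsq Hm HP) as [R1 [R2 [R3 _]]].
    auto.
  - intros A B C mu HP. destruct (point_core a4 a6 u v A B C Hu Hv Hms Hd Hsq Hm HP) as [_ [_ [_ R4]]].
    exact (R4 mu).
Qed.
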